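(* Let $X$ be a set, $B\subseteq\mathbb{R}^X$ an $\mathbb{R}$-subalgebra and $Q\subseteq B$ a quadratic module with $K_{Q,X}=X$ and $\overline{m(X)}=K_{Q,Y_B}$. Let $f\in\mathbb{R}^X$ and $A=B[f]\subseteq\mathbb{R}^X$. In each of the following cases, $K_{Q',X}=X$ and $\overline{m(X)}=K_{Q',Y_A}$: (1) $f=\sqrt[r]{g}$ (pointwise real $r$-th root) with $r$ odd and $g\in B$, and $Q'$ is the quadratic module of $A$ generated by $Q$; (2) $f=\sqrt[s]{g}$ (pointwise nonnegative $s$-th root) with $s$ even, $g\in B$, $g\ge0$ on $X$, and $Q'$ is the quadratic module of $A$ generated by $Q$ and $f$; (3) $f=\frac1g$ with $g\in B$, $g(x)\ne0$ for all $x\in X$, and $Q'$ is the quadratic module of $A$ generated by $Q$; (4) $f=g\cdot\chi_{\{q\ge0\}}+h\cdot\chi_{\{q<0\}}$ for some $g,h,q\in B$ such that for $y\in K_{Q,Y_B}$, $\hat q(y)=0$ implies $\hat g(y)=\hat h(y)$, and $Q'$ is the quadratic module of $A$ generated by $Q$ and $-q(f-g)^2$, $q(f-h)^2$; (5) $f=\chi_{\{q\ge0\}}$ for some $q\in B$ satisfying $\{y\in K_{Q,Y_B}\mid\hat q(y)=0\}\subseteq\overline{\{y\in K_{Q,Y_B}\mid\hat q(y)>0\}}\cap\overline{\{y\in K_{Q,Y_B}\mid\hat q(y)<0\}}$, and $Q'$ is the quadratic module of $A$ generated by $Q$ and $qf$, $q(f-1)$.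
   Context: A quadratic module of a commutative unital $\mathbb{R}$-algebra $C$ is a subset $Q\subseteq C$ with $Q+Q\subseteq Q$, $c^2Q\subseteq Q$ for all $c\in C$, and $1\in Q$. For an $\mathbb{R}$-subalgebra $C\subseteq\mathbb{R}^X$ and a quadratic module $Q$ of $C$: $K_{Q,X}:=\{x\in X\mid g(x)\ge0\ \forall g\in Q\}$; $Y_C$ is the set of unital $\mathbb{R}$-algebra homomorphisms $C\to\mathbb{R}$; for $c\in C$, $\hat c\colon Y_C\to\mathbb{R}$, $\hat c(y)=y(c)$; $Y_C$ has the weakest topology making all $\hat c$ continuous; $K_{Q,Y_C}:=\{y\in Y_C\mid \hat g(y)\ge0\ \forall g\in Q\}$; $m\colon X\to Y_C$, $m(x)(c)=c(x)$. Overlines on subsets of $Y_C$ denote closure in $Y_C$. $\chi_S$ denotes the characteristic function of $S\subseteq X$, and $\{q\ge0\}=\{x\in X\mid q(x)\ge0\}$, etc. *)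

(* Defs.v *)
From Stdlib Require Import Reals List.
Open Scope R_scope.

Definition fadd {X : Type} (f g : X -> R) : X -> R := fun x => f x + g x.
Definition fmul {X : Type} (f g : X -> R) : X -> R := fun x => f x * g x.
Definition fscal {X : Type} (a : R) (f : X -> R) : X -> R := fun x => a * f x.
Definition fconst {X : Type} (a : R) : X -> R := fun _ => a.
Definition fopp {X : Type} (f : X -> R) : X -> R := fun x => - f x.

Definition is_subalgebra {X : Type} (C : (X -> R) -> Prop) : Prop :=
  C (fconst 1) /\
  (forall c d, C c -> C d -> C (fadd c d)) /\
  (forall c d, C c -> C d -> C (fmul c d)) /\
  (forall a c, C c -> C (fscal a c)).

Definition gen_alg {X : Type} (B : (X -> R) -> Prop) (f : X -> R) : (X -> R) -> Prop :=
  fun c => forall C, is_subalgebra C -> (forall b, B b -> C b) -> C f -> C c.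

Definition is_qmodule {X : Type} (C Q : (X -> R) -> Prop) : Prop :=
  (forall g, Q g -> C g) /\
  (forall g h, Q g -> Q h -> Q (fadd g h)) /\
  (forall c g, C c -> Q g -> Q (fmul (fmul c c) g)) /\
  Q (fconst 1).

Definition gen_qmodule {X : Type} (C Q G : (X -> R) -> Prop) : (X -> R) -> Prop :=
  fun a => forall M, is_qmodule C M -> (forall g, Q g -> M g) ->
                     (forall g, G g -> M g) -> M a.

Definition KX {X : Type} (Q : (X -> R) -> Prop) : X -> Prop :=
  fun x => forall g, Q g -> 0 <= g x.

(* Points of Y_C: unital R-algebra homomorphisms C -> R, represented by maps
   (X -> R) -> R whose values outside C are irrelevant. *)
Definition is_char {X : Type} (C : (X -> R) -> Prop) (y : (X -> R) -> R) : Prop :=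
  y (fconst 1) = 1 /\
  (forall c d, C c -> C d -> y (fadd c d) = y c + y d) /\
  (forall c d, C c -> C d -> y (fmul c d) = y c * y d) /\
  (forall a c, C c -> y (fscal a c) = a * y c).

Definition KY {X : Type} (Q : (X -> R) -> Prop) (y : (X -> R) -> R) : Prop :=
  forall g, Q g -> 0 <= y g.

Definition mpt {X : Type} (x : X) : (X -> R) -> R := fun c => c x.

(* y lies in the closure in Y_C of S (S a subset of Y_C), where Y_C carries the
   weakest topology making all c^ (c in C) continuous: every basic neighbourhood
   { z in Y_C | |z c_i - y c_i| < eps, i = 1..n } of y meets S. *)
Definition in_closure {X : Type} (C : (X -> R) -> Prop)
    (S : ((X -> R) -> R) -> Prop) (y : (X -> R) -> R) : Prop :=
  forall (cs : list (X -> R)) (eps : R), (forall c, In c cs -> C c) -> 0 < eps ->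
    exists z, is_char C z /\ S z /\ forall c, In c cs -> Rabs (z c - y c) < eps.

(* The conclusion "K_{Q,X} = X and closure(m(X)) = K_{Q,Y_C}". *)
Definition good {X : Type} (C Q : (X -> R) -> Prop) : Prop :=
  (forall x : X, KX Q x) /\
  (forall y, is_char C y ->
     (in_closure C (fun z => exists x : X, z = mpt x) y <-> KY Q y)).

Definition chi_ge0 {X : Type} (q : X -> R) : X -> R :=
  fun x => if Rle_dec 0 (q x) then 1 else 0.

(* Main.v *)
Require Import Defs.
From Stdlib Require Import Reals List Arith Lra Psatz FunctionalExtensionality.
Open Scope R_scope.


Lemma pow_lt_nonneg (n : nat) (u v : R) : 0 <= u -> u < v -> u ^ S n < v ^ S n.
Proof.
  intros Hu Huv. induction n as [|n IH].
  - simpl; lra.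
  - change (u * u ^ S n < v * v ^ S n).
    assert (0 <= u ^ S n) by (apply pow_le; lra).
    nra.
Qed.

Lemma pow_opp_odd (k : nat) (u : R) : (-u) ^ (2 * k + 1) = - (u ^ (2 * k + 1)).
Proof.
  induction k as [|k IH].
  - simpl; ring.
  - replace (2 * S k + 1)%nat with (S (S (2 * k + 1))) by lia.
    change ((-u) * ((-u) * (-u) ^ (2*k+1)) = - (u * (u * u ^ (2*k+1)))).
    rewrite IH. ring.
Qed.

Lemma pow_lt_odd (r : nat) (u v : R) : Nat.Odd r -> u < v -> u ^ r < v ^ r.
Proof.
  intros [k Hk] Huv. subst r.
  destruct (Rle_dec 0 u) as [Hu|Hu].
  - replace (2*k+1)%nat with (S (2*k)) by lia. apply pow_lt_nonneg; lra.
  - destruct (Rle_dec v 0) as [Hv|Hv].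
    + replace u with (- - u) by ring. replace v with (- - v) by ring.
      rewrite (pow_opp_odd k (-u)), (pow_opp_odd k (-v)).
      replace (2*k+1)%nat with (S (2*k)) by lia.
      assert ((-v) ^ S (2*k) < (-u) ^ S (2*k)) by (apply pow_lt_nonneg; lra).
      lra.
    + replace u with (- - u) by ring. rewrite (pow_opp_odd k (-u)).
      replace (2*k+1)%nat with (S (2*k)) by lia.
      assert (0 < (-u) ^ S (2*k)) by (apply pow_lt; lra).
      assert (0 < v ^ S (2*k)) by (apply pow_lt; lra).
      lra.
Qed.

Lemma inv_cont (P : R -> Prop) (phi : R -> R) (a eps : R) :
  P a -> 0 < eps ->
  (forall u v, P u -> P v -> u < v -> phi u < phi v) ->
  P (a + eps) -> (P (a - eps) \/ forall u, P u -> a - eps < u) ->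
  exists delta, 0 < delta /\ forall u, P u -> Rabs (phi u - phi a) < delta -> Rabs (u - a) < eps.
Proof.
  intros Pa He Hmon Pae Hlow.
  assert (Hle : forall u v, P u -> P v -> u <= v -> phi u <= phi v).
  { intros u v Pu Pv Huv. destruct (Rle_lt_or_eq_dec _ _ Huv) as [H|H].
    - left; apply Hmon; auto.
    - subst; lra. }
  assert (d1 : phi a < phi (a + eps)) by (apply Hmon; auto; lra).
  destruct Hlow as [Pam | Hall].
  - assert (d2 : phi (a - eps) < phi a) by (apply Hmon; auto; lra).
    exists (Rmin (phi (a + eps) - phi a) (phi a - phi (a - eps))).
    split. { apply Rmin_glb_lt; lra. }
    intros u Pu Hu.
    assert (m1 := Rmin_l (phi (a + eps) - phi a) (phi a - phi (a - eps))).
    assert (m2 := Rmin_r (phi (a + eps) - phi a) (phi a - phi (a - eps))).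
    apply Rabs_def2 in Hu. destruct Hu as [Hu1 Hu2].
    apply Rabs_def1.
    + destruct (Rlt_dec (u - a) eps) as [h|h]; auto.
      assert (phi (a + eps) <= phi u) by (apply Hle; auto; lra). lra.
    + destruct (Rlt_dec (- eps) (u - a)) as [h|h]; auto.
      assert (phi u <= phi (a - eps)) by (apply Hle; auto; lra). lra.
  - exists (phi (a + eps) - phi a). split; [lra|].
    intros u Pu Hu. apply Rabs_def2 in Hu. destruct Hu as [Hu1 Hu2].
    apply Rabs_def1.
    + destruct (Rlt_dec (u - a) eps) as [h|h]; auto.
      assert (phi (a + eps) <= phi u) by (apply Hle; auto; lra). lra.
    + specialize (Hall u Pu). lra.
Qed.



Lemma gen_alg_sub {X : Type} (B : ((X -> R) -> Prop)) (f : (X -> R)) : is_subalgebra (gen_alg B f).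
Proof.
  unfold is_subalgebra, gen_alg; split; [|split; [|split]].
  - intros C [H1 _] _ _; exact H1.
  - intros c d Hc Hd C HC HBC HfC. pose proof HC as [_ [H _]]. apply H; [apply Hc|apply Hd]; auto.
  - intros c d Hc Hd C HC HBC HfC. pose proof HC as [_ [_ [H _]]]. apply H; [apply Hc|apply Hd]; auto.
  - intros a c Hc C HC HBC HfC. pose proof HC as [_ [_ [_ H]]]. apply H; apply Hc; auto.
Qed.

Lemma gen_alg_B {X : Type} (B : ((X -> R) -> Prop)) (f : (X -> R)) (b : (X -> R)) : B b -> gen_alg B f b.
Proof. intros Hb C _ HBC _; auto. Qed.

Lemma gen_alg_f {X : Type} (B : ((X -> R) -> Prop)) (f : (X -> R)) : gen_alg B f f.
Proof. intros C _ _ Hf; auto. Qed.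

Lemma char_restrict {X : Type} (B : ((X -> R) -> Prop)) (f : (X -> R)) (y : ((X -> R) -> R)) : is_char (gen_alg B f) y -> is_char B y.
Proof.
  intros [H1 [H2 [H3 H4]]]; repeat split; auto.
  - intros; apply H2; apply gen_alg_B; auto.
  - intros; apply H3; apply gen_alg_B; auto.
  - intros; apply H4; apply gen_alg_B; auto.
Qed.

Lemma char_mpt {X : Type} (C : ((X -> R) -> Prop)) (x : X) : is_char C (mpt x).
Proof. unfold is_char, mpt, fconst, fadd, fmul, fscal; repeat split; auto. Qed.

Lemma qm_Q {X : Type} (C : ((X -> R) -> Prop)) (Q : ((X -> R) -> Prop)) (G : ((X -> R) -> Prop)) (g : (X -> R)) : Q g -> gen_qmodule C Q G g.
Proof. intros Hg M _ HQ _; auto. Qed.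

Lemma qm_G {X : Type} (C : ((X -> R) -> Prop)) (Q : ((X -> R) -> Prop)) (G : ((X -> R) -> Prop)) (g : (X -> R)) : G g -> gen_qmodule C Q G g.
Proof. intros Hg M _ _ HG; auto. Qed.

Definition approx {X : Type} (B : ((X -> R) -> Prop)) (S : X -> Prop) (y : (X -> R) -> R) (c : X -> R) : Prop :=
  forall eps, 0 < eps -> exists L delta, (forall b, In b L -> B b) /\ 0 < delta /\
    forall x, S x -> (forall b, In b L -> Rabs (b x - y b) < delta) -> Rabs (c x - y c) < eps.

Definition dense {X : Type} (B : ((X -> R) -> Prop)) (S : X -> Prop) (y : (X -> R) -> R) : Prop :=
  forall L delta, (forall b, In b L -> B b) -> 0 < delta ->
    exists x, S x /\ forall b, In b L -> Rabs (b x - y b) < delta.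

Lemma in_app_B {X : Type} (B : ((X -> R) -> Prop)) (L1 L2 : list (X -> R)) :
  (forall b, In b L1 -> B b) -> (forall b, In b L2 -> B b) -> forall b, In b (L1 ++ L2) -> B b.
Proof. intros H1 H2 b Hb. apply in_app_or in Hb. destruct Hb; auto. Qed.

Lemma approx_sub {X : Type} (B : ((X -> R) -> Prop)) (f : (X -> R)) (S : (X -> Prop)) (y : ((X -> R) -> R)) : is_char (gen_alg B f) y ->
  is_subalgebra (fun c => gen_alg B f c /\ approx B S y c).
Proof.
  intros [Y1 [Y2 [Y3 Y4]]]. destruct (gen_alg_sub B f) as [A1 [A2 [A3 A4]]].
  split; [|split; [|split]].
  - split; [exact A1|]. intros eps He. exists nil, 1. repeat split; try lra.
    + intros b [].
    + intros x _ _. rewrite Y1. unfold fconst. rewrite Rminus_diag, Rabs_R0; auto.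
  - intros c d [Hc ac] [Hd ad]; split; [auto|]. intros eps He.
    destruct (ac (eps/2)) as [L1 [d1 [HL1 [Hd1 H1]]]]; [lra|].
    destruct (ad (eps/2)) as [L2 [d2 [HL2 [Hd2 H2]]]]; [lra|].
    exists (L1 ++ L2), (Rmin d1 d2). split; [apply in_app_B; auto|].
    split; [apply Rmin_glb_lt; auto|].
    intros x Sx Hx. rewrite Y2 by auto. unfold fadd.
    assert (E1 : Rabs (c x - y c) < eps/2).
    { apply H1; auto. intros b Hb. eapply Rlt_le_trans; [apply Hx; apply in_or_app; auto| apply Rmin_l]. }
    assert (E2 : Rabs (d x - y d) < eps/2).
    { apply H2; auto. intros b Hb. eapply Rlt_le_trans; [apply Hx; apply in_or_app; auto| apply Rmin_r]. }
    replace (c x + d x - (y c + y d)) with ((c x - y c) + (d x - y d)) by ring.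
    eapply Rle_lt_trans; [apply Rabs_triang|]. lra.
  - intros c d [Hc ac] [Hd ad]; split; [auto|]. intros eps He.
    set (e1 := Rmin 1 (eps / (2 * (Rabs (y d) + 1)))).
    set (e2 := Rmin 1 (eps / (2 * (Rabs (y c) + 1)))).
    assert (Pd : 0 < Rabs (y d) + 1) by (pose proof (Rabs_pos (y d)); lra).
    assert (Pc : 0 < Rabs (y c) + 1) by (pose proof (Rabs_pos (y c)); lra).
    assert (He1 : 0 < e1). { apply Rmin_glb_lt; [lra|]. apply Rdiv_lt_0_compat; lra. }
    assert (He2 : 0 < e2). { apply Rmin_glb_lt; [lra|]. apply Rdiv_lt_0_compat; lra. }
    destruct (ac e1) as [L1 [d1 [HL1 [Hd1 H1]]]]; [lra|].
    destruct (ad e2) as [L2 [d2 [HL2 [Hd2 H2]]]]; [lra|].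
    exists (L1 ++ L2), (Rmin d1 d2). split; [apply in_app_B; auto|].
    split; [apply Rmin_glb_lt; auto|].
    intros x Sx Hx. rewrite Y3 by auto. unfold fmul.
    assert (E1 : Rabs (c x - y c) < e1).
    { apply H1; auto. intros b Hb. eapply Rlt_le_trans; [apply Hx; apply in_or_app; auto| apply Rmin_l]. }
    assert (E2 : Rabs (d x - y d) < e2).
    { apply H2; auto. intros b Hb. eapply Rlt_le_trans; [apply Hx; apply in_or_app; auto| apply Rmin_r]. }
    replace (c x * d x - y c * y d) with ((c x - y c) * d x + y c * (d x - y d)) by ring.
    eapply Rle_lt_trans; [apply Rabs_triang|]. rewrite !Rabs_mult.
    assert (e1a := Rmin_r 1 (eps / (2 * (Rabs (y d) + 1)))).
    assert (e2a := Rmin_r 1 (eps / (2 * (Rabs (y c) + 1)))).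
    assert (e2b := Rmin_l 1 (eps / (2 * (Rabs (y c) + 1)))).
    fold e1 in e1a. fold e2 in e2a, e2b.
    assert (Bd : Rabs (d x) <= Rabs (y d) + 1).
    { replace (d x) with ((d x - y d) + y d) by ring.
      eapply Rle_trans; [apply Rabs_triang|]. lra. }
    assert (T1 : Rabs (c x - y c) * Rabs (d x) < eps / 2).
    { apply Rle_lt_trans with (Rabs (c x - y c) * (Rabs (y d) + 1)).
      - apply Rmult_le_compat_l; [apply Rabs_pos|auto].
      - apply Rlt_le_trans with (e1 * (Rabs (y d) + 1)).
        + apply Rmult_lt_compat_r; auto.
        + apply Rle_trans with (eps / (2 * (Rabs (y d) + 1)) * (Rabs (y d) + 1)).
          * apply Rmult_le_compat_r; lra.
          * right. field. lra. }
    assert (T2 : Rabs (y c) * Rabs (d x - y d) <= eps / 2).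
    { apply Rle_trans with ((Rabs (y c) + 1) * e2).
      - apply Rmult_le_compat; try apply Rabs_pos; lra.
      - apply Rle_trans with ((Rabs (y c) + 1) * (eps / (2 * (Rabs (y c) + 1)))).
        + apply Rmult_le_compat_l; lra.
        + right. field. lra. }
    lra.
  - intros a c [Hc ac]; split; [auto|]. intros eps He.
    assert (Pa : 0 < Rabs a + 1) by (pose proof (Rabs_pos a); lra).
    destruct (ac (eps / (Rabs a + 1))) as [L1 [d1 [HL1 [Hd1 H1]]]].
    { apply Rdiv_lt_0_compat; lra. }
    exists L1, d1. repeat split; auto.
    intros x Sx Hx. rewrite Y4 by auto. unfold fscal.
    replace (a * c x - a * y c) with (a * (c x - y c)) by ring.
    rewrite Rabs_mult. specialize (H1 x Sx Hx).
    apply Rle_lt_trans with ((Rabs a + 1) * Rabs (c x - y c)).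
    + apply Rmult_le_compat_r; [apply Rabs_pos|lra].
    + apply Rlt_le_trans with ((Rabs a + 1) * (eps / (Rabs a + 1))).
      * apply Rmult_lt_compat_l; auto.
      * right; field; lra.
Qed.

Lemma approx_all {X : Type} (B : ((X -> R) -> Prop)) (f : (X -> R)) (S : (X -> Prop)) (y : ((X -> R) -> R)) : is_char (gen_alg B f) y -> approx B S y f ->
  forall c, gen_alg B f c -> approx B S y c.
Proof.
  intros Hy Hf c Hc.
  assert (H := Hc (fun c => gen_alg B f c /\ approx B S y c) (approx_sub B f S y Hy)).
  apply H.
  - intros b Hb. split; [apply gen_alg_B; auto|].
    intros eps He. exists (b :: nil), eps. repeat split; auto.
    + intros b' [<-|[]]; auto.
    + intros x _ Hx. apply Hx; left; auto.
  - split; [apply gen_alg_f|auto].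
Qed.

Lemma approx_list {X : Type} (B : ((X -> R) -> Prop)) (S : (X -> Prop)) (y : ((X -> R) -> R)) (cs : list (X -> R)) : (forall c, In c cs -> approx B S y c) ->
  forall eps, 0 < eps -> exists L delta, (forall b, In b L -> B b) /\ 0 < delta /\
    forall x, S x -> (forall b, In b L -> Rabs (b x - y b) < delta) ->
      forall c, In c cs -> Rabs (c x - y c) < eps.
Proof.
  induction cs as [|c cs IH]; intros Hcs eps He.
  - exists nil, 1. repeat split; try lra. intros b []. intros x _ _ c [].
  - destruct (IH (fun c' H => Hcs c' (or_intror H)) eps He) as [L1 [d1 [HL1 [Hd1 H1]]]].
    destruct (Hcs c (or_introl eq_refl) eps He) as [L2 [d2 [HL2 [Hd2 H2]]]].
    exists (L1 ++ L2), (Rmin d1 d2). split; [apply in_app_B; auto|].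
    split; [apply Rmin_glb_lt; auto|].
    intros x Sx Hx c' [<-|Hc'].
    + apply H2; auto. intros b Hb. eapply Rlt_le_trans; [apply Hx; apply in_or_app; auto| apply Rmin_r].
    + apply H1; auto. intros b Hb. eapply Rlt_le_trans; [apply Hx; apply in_or_app; auto| apply Rmin_l].
Qed.

Lemma key_closure {X : Type} (B : ((X -> R) -> Prop)) (f : (X -> R)) (S : (X -> Prop)) (y : ((X -> R) -> R)) : is_char (gen_alg B f) y -> dense B S y -> approx B S y f ->
  in_closure (gen_alg B f) (fun z => exists x : X, z = mpt x) y.
Proof.
  intros Hy Hd Hf cs eps Hcs He.
  destruct (approx_list B S y cs (fun c H => approx_all B f S y Hy Hf c (Hcs c H)) eps He)
    as [L [delta [HL [Hdel H]]]].
  destruct (Hd L delta HL Hdel) as [x [Sx Hx]].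
  exists (mpt x). split; [apply char_mpt|]. split; [exists x; auto|].
  intros c Hc. unfold mpt. apply H; auto.
Qed.

Lemma dense_X {X : Type} (B : ((X -> R) -> Prop)) (Q : ((X -> R) -> Prop)) (y : ((X -> R) -> R)) : good B Q -> is_char B y -> KY Q y -> dense B (fun _ => True) y.
Proof.
  intros [_ Hg] Hy HK L delta HL Hd.
  apply (proj2 (Hg y Hy)) in HK.
  destruct (HK L delta HL Hd) as [z [_ [[x ->] Hz]]].
  exists x; split; auto.
Qed.

Lemma closure_nonneg {X : Type} (C : ((X -> R) -> Prop)) (y : ((X -> R) -> R)) (a : (X -> R)) : C a -> (forall x : X, 0 <= a x) ->
  in_closure C (fun z => exists x : X, z = mpt x) y -> 0 <= y a.
Proof.
  intros Ha Hpos Hcl. destruct (Rle_dec 0 (y a)) as [h|h]; auto.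
  destruct (Hcl (a :: nil) (- y a)) as [z [_ [[x ->] Hz]]].
  - intros c [<-|[]]; auto.
  - lra.
  - specialize (Hz a (or_introl eq_refl)). unfold mpt in Hz.
    specialize (Hpos x). apply Rabs_def2 in Hz. lra.
Qed.

Lemma good_gen {X : Type} (B : ((X -> R) -> Prop)) (Q : ((X -> R) -> Prop)) (f : (X -> R)) (G : ((X -> R) -> Prop)) : is_subalgebra B -> is_qmodule B Q -> good B Q ->
  (forall g, G g -> gen_alg B f g /\ forall x, 0 <= g x) ->
  (forall y, is_char (gen_alg B f) y -> KY (gen_qmodule (gen_alg B f) Q G) y ->
     in_closure (gen_alg B f) (fun z => exists x : X, z = mpt x) y) ->
  good (gen_alg B f) (gen_qmodule (gen_alg B f) Q G).
Proof.
  intros HB HQ Hg HG Hkey.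
  destruct (gen_alg_sub B f) as [A1 [A2 [A3 A4]]].
  destruct HQ as [Q1 _].
  split.
  - intros x g Hgq.
    refine (proj2 (Hgq (fun a => gen_alg B f a /\ 0 <= a x) _ _ _)).
    + split; [|split; [|split]].
      * intros g0 [H _]; auto.
      * intros g0 h [H1 H2] [H3 H4]; split; auto. unfold fadd; lra.
      * intros c g0 Hc [H1 H2]; split; auto. unfold fmul. nra.
      * split; auto. unfold fconst; lra.
    + intros g0 Hg0. split; [apply gen_alg_B; auto|]. apply (proj1 Hg x g0 Hg0).
    + intros g0 Hg0. split; [apply HG; auto|]. apply HG; auto.
  - intros y Hy. split.
    + intros Hcl g Hgq. destruct Hy as [Y1 [Y2 [Y3 Y4]]].
      refine (proj2 (Hgq (fun a => gen_alg B f a /\ 0 <= y a) _ _ _)).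
      * split; [|split; [|split]].
        -- intros g0 [H _]; auto.
        -- intros g0 h [H1 H2] [H3 H4]; split; auto. rewrite Y2 by auto; lra.
        -- intros c g0 Hc [H1 H2]; split; auto. rewrite Y3, Y3 by auto. nra.
        -- split; auto. rewrite Y1; lra.
      * intros g0 Hg0. split; [apply gen_alg_B; auto|].
        apply closure_nonneg with (gen_alg B f); auto. apply gen_alg_B; auto.
        intro x; apply (proj1 Hg x g0 Hg0).
      * intros g0 Hg0. split; [apply HG; auto|].
        apply closure_nonneg with (gen_alg B f); auto; apply HG; auto.
    + apply Hkey; auto.
Qed.



Lemma sub_opp {X : Type} (C : (X -> R) -> Prop) c : is_subalgebra C -> C c -> C (fopp c).
Proof.
  intros [_ [_ [_ H4]]] Hc.
  replace (fopp c) with (fscal (-1) c); auto.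
  extensionality x; unfold fopp, fscal; ring.
Qed.

Lemma char_opp {X : Type} (C : (X -> R) -> Prop) y c : is_char C y -> C c -> y (fopp c) = - y c.
Proof.
  intros [_ [_ [_ H4]]] Hc.
  replace (fopp c) with (fscal (-1) c); [rewrite H4; auto; ring|].
  extensionality x; unfold fopp, fscal; ring.
Qed.

Lemma sub_const {X : Type} (C : (X -> R) -> Prop) a : is_subalgebra C -> C (fconst a).
Proof.
  intros [H1 [_ [_ H4]]].
  replace (fconst a) with (fscal a (fconst (X:=X) 1)); auto.
  extensionality x; unfold fconst, fscal; ring.
Qed.

Lemma char_const {X : Type} (C : (X -> R) -> Prop) y a : is_subalgebra C -> is_char C y ->
  y (fconst a) = a.
Proof.
  intros [H1 _] [Y1 [_ [_ Y4]]].
  replace (fconst a) with (fscal a (fconst (X:=X) 1)).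
  - rewrite Y4, Y1; auto; ring.
  - extensionality x; unfold fconst, fscal; ring.
Qed.

Fixpoint fpow {X : Type} (f : X -> R) (n : nat) : X -> R :=
  match n with O => fconst 1 | S n => fmul f (fpow f n) end.

Lemma fpow_eval {X : Type} (f : X -> R) n x : fpow f n x = f x ^ n.
Proof. induction n; simpl; unfold fconst, fmul in *; auto. rewrite IHn; auto. Qed.

Lemma sub_fpow {X : Type} (C : (X -> R) -> Prop) f n : is_subalgebra C -> C f -> C (fpow f n).
Proof.
  intros HC Hf. induction n; simpl.
  - apply HC.
  - apply HC; auto.
Qed.

Lemma char_fpow {X : Type} (C : (X -> R) -> Prop) y f n : is_subalgebra C -> is_char C y -> C f ->
  y (fpow f n) = y f ^ n.
Proof.
  intros HC Hy Hf. induction n; simpl.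
  - apply Hy.
  - destruct Hy as [_ [_ [Y3 _]]]. rewrite Y3; auto. rewrite IHn; auto.
    apply sub_fpow; auto.
Qed.

Lemma inv_close a t eps : a <> 0 -> 0 < eps ->
  Rabs (t - a) < Rmin (Rabs a / 2) (eps * Rabs a * Rabs a / 2) -> Rabs (/ t - / a) < eps.
Proof.
  intros Ha He H.
  assert (H1 := Rmin_l (Rabs a / 2) (eps * Rabs a * Rabs a / 2)).
  assert (H2 := Rmin_r (Rabs a / 2) (eps * Rabs a * Rabs a / 2)).
  assert (Pa : 0 < Rabs a) by (apply Rabs_pos_lt; auto).
  assert (Tt : Rabs a / 2 < Rabs t).
  { assert (Rabs a <= Rabs t + Rabs (t - a)).
    { replace a with (t - (t - a)) at 1 by ring. eapply Rle_trans; [apply Rabs_triang|].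
      rewrite Rabs_Ropp. lra. }
    lra. }
  assert (Ht : t <> 0). { intro E; subst; rewrite Rabs_R0 in Tt; lra. }
  replace (/ t - / a) with ((a - t) * / (t * a)) by (field; auto).
  rewrite Rabs_mult, Rabs_inv, Rabs_mult.
  replace (Rabs (a - t)) with (Rabs (t - a)) by (rewrite <- Rabs_Ropp; f_equal; ring).
  assert (Pt : 0 < Rabs t) by lra.
  apply Rmult_lt_reg_r with (Rabs t * Rabs a). { apply Rmult_lt_0_compat; auto. }
  rewrite Rmult_assoc, Rinv_l by (apply Rgt_not_eq; apply Rmult_lt_0_compat; auto).
  assert (0 < eps * (Rabs a * (Rabs t - Rabs a / 2))).
  { apply Rmult_lt_0_compat; auto. apply Rmult_lt_0_compat; lra. }
  nra.
Qed.


Lemma KY_restrict {X : Type} (A Q G : (X -> R) -> Prop) y :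
  KY (gen_qmodule A Q G) y -> KY Q y.
Proof. intros H g Hg; apply H; apply qm_Q; auto. Qed.

Lemma case1 (X : Type) (B Q : (X -> R) -> Prop)
  (HB : is_subalgebra B) (HQ : is_qmodule B Q) (Hgood : good B Q)
  (r : nat) (g f : X -> R) : Nat.Odd r -> B g -> (forall x, f x ^ r = g x) ->
  good (gen_alg B f) (gen_qmodule (gen_alg B f) Q (fun _ => False)).
Proof.
  intros Hr Hg Hf. apply good_gen; auto. { intros _ []. }
  intros y Hy HK.
  pose proof (char_restrict B f y Hy) as HyB.
  pose proof (KY_restrict _ _ _ y HK) as HKQ.
  apply key_closure with (fun _ => True); auto.
  { apply dense_X with Q; auto. }
  assert (gf : g = fpow f r) by (extensionality x; rewrite fpow_eval; auto).
  assert (yg : y g = y f ^ r).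
  { rewrite gf. apply (char_fpow (gen_alg B f)); [apply gen_alg_sub|exact Hy|apply gen_alg_f]. }
  intros eps He.
  destruct (inv_cont (fun _ => True) (fun u => u ^ r) (y f) eps) as [delta [Hd H]]; auto.
  { intros u v _ _ Huv. apply pow_lt_odd; auto. }
  exists (g :: nil), delta. split; [intros b [<-|[]]; auto|]. split; auto.
  intros x _ Hx. apply H; auto. rewrite Hf, <- yg. apply Hx; left; auto.
Qed.

Lemma case2 (X : Type) (B Q : (X -> R) -> Prop)
  (HB : is_subalgebra B) (HQ : is_qmodule B Q) (Hgood : good B Q)
  (s : nat) (g f : X -> R) : (2 <= s)%nat -> B g ->
  (forall x, 0 <= f x /\ f x ^ s = g x) ->
  good (gen_alg B f) (gen_qmodule (gen_alg B f) Q (fun u => u = f)).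
Proof.
  intros Hs Hg Hf. apply good_gen; auto.
  { intros u ->. split; [apply gen_alg_f|]. intro x; apply Hf. }
  intros y Hy HK.
  pose proof (char_restrict B f y Hy) as HyB.
  pose proof (KY_restrict _ _ _ y HK) as HKQ.
  assert (yf0 : 0 <= y f) by (apply HK; apply qm_G; auto).
  apply key_closure with (fun _ => True); auto.
  { apply dense_X with Q; auto. }
  assert (gf : g = fpow f s) by (extensionality x; rewrite fpow_eval; apply eq_sym, Hf).
  assert (yg : y g = y f ^ s).
  { rewrite gf. apply (char_fpow (gen_alg B f)); [apply gen_alg_sub|exact Hy|apply gen_alg_f]. }
  intros eps He.
  destruct (inv_cont (fun u => 0 <= u) (fun u => u ^ s) (y f) eps) as [delta [Hd H]]; auto.
  { intros u v Hu _ Huv. replace s with (S (s - 1)) by lia. apply pow_lt_nonneg; auto. }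
  { simpl; lra. }
  { destruct (Rle_dec 0 (y f - eps)); [left; auto|right; intros u Hu; lra]. }
  exists (g :: nil), delta. split; [intros b [<-|[]]; auto|]. split; auto.
  intros x _ Hx. apply H; [apply Hf|]. rewrite (proj2 (Hf x)), <- yg. apply Hx; left; auto.
Qed.

Lemma case3 (X : Type) (B Q : (X -> R) -> Prop)
  (HB : is_subalgebra B) (HQ : is_qmodule B Q) (Hgood : good B Q)
  (g : X -> R) : B g -> (forall x, g x <> 0) ->
  good (gen_alg B (fun x => / g x)) (gen_qmodule (gen_alg B (fun x => / g x)) Q (fun _ => False)).
Proof.
  set (f := fun x => / g x).
  intros Hg Hne. apply good_gen; auto. { intros _ []. }
  intros y Hy HK.
  pose proof (char_restrict B f y Hy) as HyB.
  pose proof (KY_restrict _ _ _ y HK) as HKQ.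
  apply key_closure with (fun _ => True); auto.
  { apply dense_X with Q; auto. }
  assert (E : fmul f g = fconst 1).
  { extensionality x. unfold fmul, fconst, f. field. auto. }
  assert (yfg : y f * y g = 1).
  { destruct Hy as [Y1 [_ [Y3 _]]]. rewrite <- Y3, E; auto.
    apply gen_alg_f. apply gen_alg_B; auto. }
  assert (yg0 : y g <> 0) by (intro E0; rewrite E0 in yfg; lra).
  assert (yfi : y f = / y g) by (field_simplify_eq; auto; lra).
  intros eps He.
  exists (g :: nil), (Rmin (Rabs (y g) / 2) (eps * Rabs (y g) * Rabs (y g) / 2)).
  split; [intros b [<-|[]]; auto|]. split.
  { assert (0 < Rabs (y g)) by (apply Rabs_pos_lt; auto).
    apply Rmin_glb_lt; [lra|]. apply Rmult_lt_0_compat; [|lra].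
    apply Rmult_lt_0_compat; [apply Rmult_lt_0_compat|]; auto. }
  intros x _ Hx. rewrite yfi. unfold f. apply inv_close; auto. apply Hx; left; auto.
Qed.


Lemma sq_zero a d : a < 0 -> 0 <= a * (d * d) -> d = 0.
Proof.
  intros Ha H. destruct (Req_dec d 0) as [|Hd]; auto.
  assert (0 < d * d) by (apply Rsqr_pos_lt; auto).
  assert (a * (d * d) < 0) by (apply Rmult_neg_pos; auto). lra.
Qed.

Ltac nn := first [ rewrite Rplus_opp_r, Rmult_0_l, Rmult_0_r; lra | apply Rmult_le_pos; [lra|apply Rle_0_sqr] ].

Lemma case4 (X : Type) (B Q : (X -> R) -> Prop)
  (HB : is_subalgebra B) (HQ : is_qmodule B Q) (Hgood : good B Q)
  (g h q : X -> R) : B g -> B h -> B q ->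
  (forall y, is_char B y -> KY Q y -> y q = 0 -> y g = y h) ->
  forall f, f = (fun x => if Rle_dec 0 (q x) then g x else h x) ->
  good (gen_alg B f)
    (gen_qmodule (gen_alg B f) Q
       (fun u => u = fmul (fopp q) (fmul (fadd f (fopp g)) (fadd f (fopp g)))
              \/ u = fmul q (fmul (fadd f (fopp h)) (fadd f (fopp h))))).
Proof.
  intros Hg Hh Hq Hyq f Hfdef.
  pose proof (gen_alg_sub B f) as HA.
  pose proof HA as [A1 [A2 [A3 A4]]].
  assert (Af : gen_alg B f f) by apply gen_alg_f.
  assert (Ag : gen_alg B f g) by (apply gen_alg_B; auto).
  assert (Ah : gen_alg B f h) by (apply gen_alg_B; auto).
  assert (Aq : gen_alg B f q) by (apply gen_alg_B; auto).
  assert (Afg : gen_alg B f (fadd f (fopp g))) by (apply A2; auto; apply sub_opp; auto).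
  assert (Afh : gen_alg B f (fadd f (fopp h))) by (apply A2; auto; apply sub_opp; auto).
  assert (Aoq : gen_alg B f (fopp q)) by (apply sub_opp; auto).
  apply good_gen; auto.
  { intros u [-> | ->]; split.
    - apply A3; auto.
    - intro x. rewrite Hfdef. unfold fmul, fopp, fadd. cbv beta. destruct (Rle_dec 0 (q x)) as [H0|H0]; [|apply Rnot_le_lt in H0]; nn.
    - apply A3; auto.
    - intro x. rewrite Hfdef. unfold fmul, fopp, fadd. cbv beta. destruct (Rle_dec 0 (q x)) as [H0|H0]; [|apply Rnot_le_lt in H0]; nn. }
  intros y Hy HK.
  pose proof (char_restrict B f y Hy) as HyB.
  pose proof (KY_restrict _ _ _ y HK) as HKQ.
  pose proof Hy as [Y1 [Y2 [Y3 Y4]]].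
  apply key_closure with (fun _ => True); auto.
  { apply dense_X with Q; auto. }
  assert (yoq : y (fopp q) = - y q) by (apply (char_opp (gen_alg B f)); auto).
  assert (yog : y (fopp g) = - y g) by (apply (char_opp (gen_alg B f)); auto).
  assert (yoh : y (fopp h) = - y h) by (apply (char_opp (gen_alg B f)); auto).
  assert (yFG : y (fadd f (fopp g)) = y f - y g) by (rewrite Y2, yog; auto; apply sub_opp; auto).
  assert (yFH : y (fadd f (fopp h)) = y f - y h) by (rewrite Y2, yoh; auto; apply sub_opp; auto).
  assert (V1 : 0 <= - y q * ((y f - y g) * (y f - y g))).
  { assert (H := HK _ (qm_G _ _ _ _ (or_introl eq_refl))). cbv beta in H.
    rewrite Y3, Y3, yoq, yFG in H; auto. }
  assert (V2 : 0 <= y q * ((y f - y h) * (y f - y h))).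
  { assert (H := HK _ (qm_G _ _ _ _ (or_intror eq_refl))). cbv beta in H.
    rewrite Y3, Y3, yFH in H; auto. }
  assert (V3 : (y f - y g) * (y f - y h) = 0).
  { assert (E : fmul (fadd f (fopp g)) (fadd f (fopp h)) = fconst 0).
    { extensionality x. rewrite Hfdef. unfold fmul, fopp, fadd, fconst.
      destruct (Rle_dec 0 (q x)); ring. }
    assert (H := f_equal y E). rewrite (char_const (gen_alg B f)) in H; auto.
    rewrite Y3, yFG, yFH in H; auto. }
  intros eps He.
  destruct (Rtotal_order (y q) 0) as [Hneg | [Hz | Hpos]].
  - assert (E : y f = y h) by (assert (y f - y h = 0) by (apply (sq_zero (y q)); auto); lra).
    exists (q :: h :: nil), (Rmin (- y q) eps). split.
    { intros b [<-|[<-|[]]]; auto. }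
    split; [apply Rmin_glb_lt; lra|].
    intros x _ Hx.
    assert (Hx1 := Hx q (or_introl eq_refl)). assert (Hx2 := Hx h (or_intror (or_introl eq_refl))).
    assert (m1 := Rmin_l (- y q) eps). assert (m2 := Rmin_r (- y q) eps).
    apply Rabs_def2 in Hx1.
    assert (fx : f x = h x) by (rewrite Hfdef; destruct (Rle_dec 0 (q x)); [lra|auto]).
    rewrite fx, E. lra.
  - assert (E : y g = y h) by (apply Hyq; auto).
    assert (E2 : y f = y g).
    { rewrite <- E in V3. destruct (Rmult_integral _ _ V3); lra. }
    exists (g :: h :: nil), eps. split.
    { intros b [<-|[<-|[]]]; auto. }
    split; [lra|].
    intros x _ Hx.
    assert (Hx1 := Hx g (or_introl eq_refl)). assert (Hx2 := Hx h (or_intror (or_introl eq_refl))).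
    assert (fx : f x = g x \/ f x = h x) by (rewrite Hfdef; destruct (Rle_dec 0 (q x)); auto).
    destruct fx as [fx|fx]; rewrite fx, E2; [auto|rewrite E; auto].
  - assert (E : y f = y g) by (assert (y f - y g = 0) by (apply (sq_zero (- y q)); lra); lra).
    exists (q :: g :: nil), (Rmin (y q) eps). split.
    { intros b [<-|[<-|[]]]; auto. }
    split; [apply Rmin_glb_lt; lra|].
    intros x _ Hx.
    assert (Hx1 := Hx q (or_introl eq_refl)). assert (Hx2 := Hx g (or_intror (or_introl eq_refl))).
    assert (m1 := Rmin_l (y q) eps). assert (m2 := Rmin_r (y q) eps).
    apply Rabs_def2 in Hx1.
    assert (fx : f x = g x) by (rewrite Hfdef; destruct (Rle_dec 0 (q x)); [auto|lra]).
    rewrite fx, E. lra.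
Qed.


Lemma dense_side (X : Type) (B Q : (X -> R) -> Prop) (HB : is_subalgebra B) (Hgood : good B Q)
  (q : X -> R) (s : R) y : B q ->
  in_closure B (fun z => KY Q z /\ 0 < s * z q) y ->
  dense B (fun x => 0 < s * q x) y.
Proof.
  intros Hq Hcl L delta HL Hd.
  destruct (Hcl L (delta / 2)) as [z [Hz [[KZ Zq] Hzc]]]; auto; [lra|].
  pose proof (proj2 (proj2 Hgood z Hz) KZ) as Hzcl.
  assert (Bsq : B (fscal s q)) by (apply HB; auto).
  destruct (Hzcl (fscal s q :: L) (Rmin (delta / 2) (s * z q))) as [w [_ [[x ->] Hw]]].
  { intros b [<-|Hb]; auto. }
  { apply Rmin_glb_lt; lra. }
  exists x. split.
  - assert (H := Hw _ (or_introl eq_refl)). unfold mpt in H.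
    destruct Hz as [_ [_ [_ Z4]]]. rewrite Z4 in H by auto. unfold fscal in H.
    assert (m := Rmin_r (delta / 2) (s * z q)).
    apply Rabs_def2 in H. lra.
  - intros b Hb. assert (H := Hw b (or_intror Hb)). unfold mpt in H.
    assert (m := Rmin_l (delta / 2) (s * z q)).
    assert (H2 := Hzc b Hb).
    replace (b x - y b) with ((b x - z b) + (z b - y b)) by ring.
    eapply Rle_lt_trans; [apply Rabs_triang|]. lra.
Qed.

Lemma in_closure_mono {X : Type} (C : (X -> R) -> Prop) (S1 S2 : ((X -> R) -> R) -> Prop) y :
  (forall z, S1 z -> S2 z) -> in_closure C S1 y -> in_closure C S2 y.
Proof.
  intros H Hc cs eps Hcs He. destruct (Hc cs eps Hcs He) as [z [Hz [S1z Hzz]]].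
  exists z; auto.
Qed.

Lemma case5 (X : Type) (B Q : (X -> R) -> Prop)
  (HB : is_subalgebra B) (HQ : is_qmodule B Q) (Hgood : good B Q)
  (q : X -> R) : B q ->
  (forall y, is_char B y -> KY Q y -> y q = 0 ->
     in_closure B (fun z => KY Q z /\ z q > 0) y /\
     in_closure B (fun z => KY Q z /\ z q < 0) y) ->
  forall f, f = chi_ge0 q ->
  good (gen_alg B f)
    (gen_qmodule (gen_alg B f) Q
       (fun u => u = fmul q f \/ u = fmul q (fadd f (fconst (-1))))).
Proof.
  intros Hq Hcl f Hfdef.
  pose proof (gen_alg_sub B f) as HA.
  pose proof HA as [A1 [A2 [A3 A4]]].
  assert (Af : gen_alg B f f) by apply gen_alg_f.
  assert (Aq : gen_alg B f q) by (apply gen_alg_B; auto).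
  assert (Am : gen_alg B f (fconst (-1))) by (apply sub_const; auto).
  assert (Af1 : gen_alg B f (fadd f (fconst (-1)))) by (apply A2; auto).
  apply good_gen; auto.
  { intros u [-> | ->]; split.
    - apply A3; auto.
    - intro x. rewrite Hfdef. unfold fmul, chi_ge0. cbv beta.
      destruct (Rle_dec 0 (q x)) as [H0|H0]; [|apply Rnot_le_lt in H0]; nra.
    - apply A3; auto.
    - intro x. rewrite Hfdef. unfold fmul, fadd, fconst, chi_ge0. cbv beta.
      destruct (Rle_dec 0 (q x)) as [H0|H0]; [|apply Rnot_le_lt in H0]; nra. }
  intros y Hy HK.
  pose proof (char_restrict B f y Hy) as HyB.
  pose proof (KY_restrict _ _ _ y HK) as HKQ.
  pose proof Hy as [Y1 [Y2 [Y3 Y4]]].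
  assert (ym : y (fconst (-1)) = -1) by (apply (char_const (gen_alg B f)); auto).
  assert (V1 : 0 <= y q * y f).
  { assert (H := HK _ (qm_G _ _ _ _ (or_introl eq_refl))). cbv beta in H.
    rewrite Y3 in H; auto. }
  assert (V2 : 0 <= y q * (y f - 1)).
  { assert (H := HK _ (qm_G _ _ _ _ (or_intror eq_refl))). cbv beta in H.
    rewrite Y3, Y2, ym in H; auto. }
  assert (V3 : y f = 0 \/ y f = 1).
  { assert (E : fmul f f = f).
    { extensionality x. rewrite Hfdef. unfold fmul, chi_ge0.
      destruct (Rle_dec 0 (q x)); ring. }
    assert (H := f_equal y E). rewrite Y3 in H; auto.
    assert (y f * (y f - 1) = 0) by lra.
    destruct (Rmult_integral _ _ H0); [left|right]; lra. }
  assert (fx1 : forall x, 0 < q x -> f x = 1).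
  { intros x H. rewrite Hfdef. unfold chi_ge0. destruct (Rle_dec 0 (q x)); lra. }
  assert (fx0 : forall x, q x < 0 -> f x = 0).
  { intros x H. rewrite Hfdef. unfold chi_ge0. destruct (Rle_dec 0 (q x)); lra. }
  destruct (Rtotal_order (y q) 0) as [Hneg | [Hz | Hpos]].
  - assert (E : y f = 0) by (destruct V3; nra).
    apply key_closure with (fun _ => True); auto.
    { apply dense_X with Q; auto. }
    intros eps He.
    exists (q :: nil), (- y q). split.
    { intros b [<-|[]]; auto. }
    split; [lra|].
    intros x _ Hx. assert (Hx1 := Hx q (or_introl eq_refl)). apply Rabs_def2 in Hx1.
    rewrite fx0, E by lra. rewrite Rminus_diag, Rabs_R0; auto.
  - destruct (Hcl y HyB HKQ Hz) as [Cp Cn].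
    destruct V3 as [E|E].
    + apply key_closure with (fun x => 0 < (-1) * q x); auto.
      { apply dense_side with Q; auto.
        apply in_closure_mono with (fun z => KY Q z /\ z q < 0); auto.
        intros z [K1 K2]; split; auto; lra. }
      intros eps He. exists nil, 1. split; [intros b []|]. split; [lra|].
      intros x Sx _. rewrite fx0, E by lra. rewrite Rminus_diag, Rabs_R0; auto.
    + apply key_closure with (fun x => 0 < 1 * q x); auto.
      { apply dense_side with Q; auto.
        apply in_closure_mono with (fun z => KY Q z /\ z q > 0); auto.
        intros z [K1 K2]; split; auto; lra. }
      intros eps He. exists nil, 1. split; [intros b []|]. split; [lra|].
      intros x Sx _. rewrite fx1, E by lra. rewrite Rminus_diag, Rabs_R0; auto.
  - assert (E : y f = 1) by (destruct V3; nra).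
    apply key_closure with (fun _ => True); auto.
    { apply dense_X with Q; auto. }
    intros eps He.
    exists (q :: nil), (y q). split.
    { intros b [<-|[]]; auto. }
    split; [lra|].
    intros x _ Hx. assert (Hx1 := Hx q (or_introl eq_refl)). apply Rabs_def2 in Hx1.
    rewrite fx1, E by lra. rewrite Rminus_diag, Rabs_R0; auto.
Qed.

Theorem proposition3p3 (X : Type) (B Q : (X -> R) -> Prop)
  (HB : is_subalgebra B) (HQ : is_qmodule B Q) (Hgood : good B Q) :
  (* (1) odd real root *)
  (forall (r : nat) (g f : X -> R), Nat.Odd r -> B g ->
     (forall x, f x ^ r = g x) ->
     good (gen_alg B f) (gen_qmodule (gen_alg B f) Q (fun _ => False))) /\
  (* (2) even nonnegative root *)
  (forall (s : nat) (g f : X -> R), Nat.Even s -> (2 <= s)%nat -> B g ->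
     (forall x, 0 <= g x) ->
     (forall x, 0 <= f x /\ f x ^ s = g x) ->
     good (gen_alg B f) (gen_qmodule (gen_alg B f) Q (fun u => u = f))) /\
  (* (3) inverse *)
  (forall (g : X -> R), B g -> (forall x, g x <> 0) ->
     let f := fun x => / g x in
     good (gen_alg B f) (gen_qmodule (gen_alg B f) Q (fun _ => False))) /\
  (* (4) piecewise *)
  (forall (g h q : X -> R), B g -> B h -> B q ->
     (forall y, is_char B y -> KY Q y -> y q = 0 -> y g = y h) ->
     let f := fun x => if Rle_dec 0 (q x) then g x else h x in
     good (gen_alg B f)
       (gen_qmodule (gen_alg B f) Q
          (fun u => u = fmul (fopp q) (fmul (fadd f (fopp g)) (fadd f (fopp g)))
                 \/ u = fmul q (fmul (fadd f (fopp h)) (fadd f (fopp h)))))) /\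
  (* (5) characteristic function *)
  (forall (q : X -> R), B q ->
     (forall y, is_char B y -> KY Q y -> y q = 0 ->
        in_closure B (fun z => KY Q z /\ z q > 0) y /\
        in_closure B (fun z => KY Q z /\ z q < 0) y) ->
     let f := chi_ge0 q in
     good (gen_alg B f)
       (gen_qmodule (gen_alg B f) Q
          (fun u => u = fmul q f \/ u = fmul q (fadd f (fconst (-1)))))).
Proof.
  split; [|split; [|split; [|split]]].
  - intros r g f Hr Hg Hf. eapply case1; eauto.
  - intros s g f _ Hs Hg _ Hf. eapply case2; eauto.
  - intros g Hg Hne f. apply case3; auto.
  - intros g h q Hg Hh Hq Hyq f. apply case4; auto.
  - intros q Hq Hcl f. apply case5; auto.
Qed.
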